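(* Let $\ell$ be an even positive integer and $w$ an $\ell$-perfect word over $\{0,1\}$. Then there exists an $\ell$-perfect word $z$ over $\{0,1\}$ of length $2|w|$ such that $\mathrm{even}(z)=w$.
   Context: For a finite word $z=a_1\cdots a_m$, $\mathrm{even}(z)=a_2a_4\cdots$. For words $w,u$, $|w|^{al}_u=|\{i: w[i..i+|u|-1]=u,\ i\equiv1\bmod|u|\}|$. A finite binary word $w$ is $\ell$-perfect if $|w|$ is a multiple of $\ell$ and every word $u$ of length $\ell$ satisfies $|w|^{al}_u=|w|/(\ell2^\ell)$. *)

(* Defs.v *)
From mathcomp Require Import all_boot.
Set Implicit Arguments. Unset Strict Implicit. Unset Printing Implicit Defensive.

(* Finite binary words are bit sequences; positions are 0-based here. *)
Definition word := seq bool.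

(* even(a_1 ... a_m) = a_2 a_4 ... : 1-based even positions = 0-based odd positions *)
Definition even_word (z : word) : word :=
  [seq nth false z i | i <- iota 0 (size z) & odd i].

Definition factor (w : word) (i n : nat) : word := take n (drop i w).

(* |w|^{al}_u : number of 1-based i with i = 1 mod |u| and w[i..i+|u|-1] = u,
   i.e. 0-based starting positions i = k*|u| where the occurrence fits in w. *)
Definition aligned_count (w u : word) : nat :=
  count (fun i => (i %% size u == 0) && (i + size u <= size w) &&
                  (factor w i (size u) == u))
        (iota 0 (size w)).

(* l-perfect: l | |w| and every u of length l has |w|^{al}_u = |w|/(l 2^l)
   (the equality stated multiplicatively, so no truncating division). *)
Definition perfect (l : nat) (w : word) : Prop :=
  (l %| size w) /\
  forall u : word, size u = l -> aligned_count w u * (l * 2 ^ l) = size w.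

(* Main.v *)
Require Import Defs.
From mathcomp Require Import all_boot.
From mathcomp Require Import zify.

Lemma ac_cat (b w u : word) : 0 < size b -> size b = size u ->
  aligned_count (b ++ w) u = (b == u) + aligned_count w u.
Proof.
move=> hb hbu; rewrite /aligned_count size_cat iotaD count_cat -hbu.
congr (_ + _).
  rewrite -(prednK hb) /= (prednK hb) add0n leq_addr /=.
  rewrite /factor drop0 take_size_cat //.
  rewrite (eq_in_count (a2 := pred0)) ?count_pred0 ?addn0 //.
  move=> i; rewrite mem_iota => /andP[h1 h2] /=.
  rewrite modn_small; last by lia.
  by case: i h1 h2.

rewrite add0n -[size b]addn0 iotaDl count_map addn0.
apply: eq_count => i /=.
rewrite modnDl -addnA leq_add2l.
by rewrite /factor [size b + i]addnC -drop_drop drop_size_cat.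
Qed.

Lemma ac_nil u : aligned_count [::] u = 0.
Proof. by []. Qed.

Lemma ac_flatten (u : word) (bs : seq word) : 0 < size u ->
  all (fun b => size b == size u) bs ->
  aligned_count (flatten bs) u = count (pred1 u) bs.
Proof.
move=> hu; elim: bs => [|b bs IH] //= /andP[/eqP hb hall].
by rewrite ac_cat ?hb // IH.
Qed.

Lemma size_flatten_k (k : nat) (bs : seq word) :
  all (fun b => size b == k) bs -> size (flatten bs) = k * size bs.
Proof.
elim: bs => [|b bs IH] /=; first by rewrite muln0.
move=> /andP[/eqP hb /IH h]; rewrite size_cat h hb mulnS //.
Qed.

Lemma split_blocks (n k : nat) (w : word) : size w = k * n ->
  exists bs : seq word, all (fun b => size b == n) bs /\ size bs = k /\ w = flatten bs.
Proof.
elim: k w => [|k IH] w hw.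
  by exists [::]; move: hw; rewrite mul0n => /size0nil ->.
have [bs [h1 [h2 h3]]] := IH (drop n w) ltac:(rewrite size_drop hw mulSn; lia).
exists (take n w :: bs); split => /=.
  by rewrite size_takel ?eqxx ?h1 // hw mulSn leq_addr.
by rewrite h2 -h3 cat_take_drop.
Qed.

Fixpoint shuffle (a c : word) : word :=
  match a, c with
  | x :: a', y :: c' => x :: y :: shuffle a' c'
  | _, _ => [::]
  end.

Lemma size_shuffle a c : size a = size c -> size (shuffle a c) = size a + size c.
Proof.
elim: a c => [|x a IH] [|y c] //= [] /IH ->; lia.
Qed.

Lemma shuffle_inj a c a' c' : size a = size c -> size a' = size c' ->
  shuffle a c = shuffle a' c' -> a = a' /\ c = c'.
Proof.
elim: a c a' c' => [|x a IH] [|y c] [|x' a'] [|y' c'] //= h h'.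
all: try (by case: h'); try (by case: h).
case=> -> -> /IH [] //; [by case: h | by case: h' | by move=> -> ->].
Qed.

Lemma shuffle_surj n (u : word) : size u = n.*2 ->
  exists e o, size e = n /\ size o = n /\ u = shuffle e o.
Proof.
elim: n u => [|n IH] [|x [|y t]] //=.
- by exists [::], [::].
- rewrite doubleS => -[] /IH [e [o [h1 [h2 ->]]]].
  by exists (x :: e), (y :: o); rewrite /= h1 h2.
Qed.

Lemma even_word_cons2 x y t : even_word (x :: y :: t) = y :: even_word t.
Proof.
rewrite /even_word /= -[2]/(2 + 0) iotaDl filter_map -map_comp /=.
congr (_ :: _); rewrite (eq_filter (a2 := odd)).
  by apply: eq_map => i.
by move=> i /=; rewrite negbK add0n.
Qed.

Lemma even_word_shuffle_cat a c t : size a = size c ->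
  even_word (shuffle a c ++ t) = c ++ even_word t.
Proof.
elim: a c => [|x a IH] [|y c] //= [] h.
by rewrite even_word_cons2 IH.
Qed.

Definition g1 m (b : word) := shuffle (drop m b) (take m b).
Definition g2 m (b : word) := shuffle (take m b) (drop m b).
Definition zsof m (bs : seq word) := flatten [seq [:: g1 m b; g2 m b] | b <- bs].

Lemma size_td m (b : word) : size b = m.*2 -> size (take m b) = m /\ size (drop m b) = m.
Proof. move=> h; rewrite size_drop size_takel h; lia. Qed.

Lemma g1_eq m b e o : size b = m.*2 -> size e = m -> size o = m ->
  (g1 m b == shuffle e o) = (b == o ++ e).
Proof.
move=> hb he ho; have [ht hd] := size_td _ _ hb.
apply/eqP/eqP => [/shuffle_inj [] | ->].
- by rewrite ht hd.
- by rewrite he ho.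
- by move=> <- <-; rewrite cat_take_drop.
by rewrite /g1 take_size_cat // drop_size_cat.
Qed.

Lemma g2_eq m b e o : size b = m.*2 -> size e = m -> size o = m ->
  (g2 m b == shuffle e o) = (b == e ++ o).
Proof.
move=> hb he ho; have [ht hd] := size_td _ _ hb.
apply/eqP/eqP => [/shuffle_inj [] | ->].
- by rewrite ht hd.
- by rewrite he ho.
- by move=> <- <-; rewrite cat_take_drop.
by rewrite /g2 take_size_cat // drop_size_cat.
Qed.

Lemma zs_props m (bs : seq word) : all (fun b => size b == m.*2) bs ->
  [/\ all (fun b => size b == m.*2) (zsof m bs), size (zsof m bs) = 2 * size bs,
      even_word (flatten (zsof m bs)) = flatten bs &
      forall e o, size e = m -> size o = m ->
      count (pred1 (shuffle e o)) (zsof m bs) =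
        count (pred1 (o ++ e)) bs + count (pred1 (e ++ o)) bs].
Proof.
elim: bs => [|b bs IH] /=; first by split.
move=> /andP[/eqP hb /IH [h1 h2 h3 h4]].
have [ht hd] := size_td _ _ hb.
rewrite /zsof /= -/(zsof m bs); split.
- by rewrite /= h1 /g1 /g2 !size_shuffle ?ht ?hd // -addnn !eqxx.
- by rewrite h2; lia.
- rewrite /g1 even_word_shuffle_cat ?hd ?ht // /g2 even_word_shuffle_cat ?hd ?ht //.
  by rewrite h3 catA cat_take_drop.
move=> e o he ho /=.
by rewrite (g1_eq _ _ _ _ hb he ho) (g2_eq _ _ _ _ hb he ho) h4 // addnA addnACA.
Qed.

Theorem corollary11 (l : nat) (w : word) :
  0 < l -> ~~ odd l -> perfect l w ->
  exists z : word, perfect l z /\ size z = 2 * size w /\ even_word z = w.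
Proof.
move=> l0 hev [hdiv hcnt].
set m := l./2.
have hl : l = m.*2 by move: (odd_double_half l); rewrite (negbTE hev).
have [bs [hall [hsz hw]]] := split_blocks l (size w %/ l) w (esym (divnK hdiv)).
rewrite hl in hall.
have [h1 h2 h3 h4] := zs_props _ _ hall.
have hszw : size w = l * size bs by rewrite hw (size_flatten_k _ _ hall) -hl.
have hszz : size (flatten (zsof m bs)) = 2 * size w.
  by rewrite (size_flatten_k _ _ h1) h2 hszw -hl; lia.
exists (flatten (zsof m bs)); split; last by rewrite h3 -hw.
split; first by rewrite (size_flatten_k _ _ h1) -hl dvdn_mulr.
move=> u hu.
rewrite ac_flatten ?hu ?hl //; last by lia.
have [e [o [he [ho hu']]]] := shuffle_surj m u ltac:(by rewrite hu).
have hc : forall v : word, size v = m.*2 ->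
    count_mem v bs * (m.*2 * 2 ^ m.*2) = size w.
  move=> v hv; rewrite -ac_flatten ?hv // -?hw -?hl; last by lia.
  by apply: hcnt; rewrite hl.
rewrite hu' h4 // hszz mulnDl !hc ?size_cat ?he ?ho //; lia.
Qed.
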